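(* Let $\{\rho_\theta\}_{\theta\in\Theta}$ be a differentiable family of density operators on a $d$-dimensional Hilbert space. For $\varepsilon\in(0,1)$ set $\rho_\theta^\varepsilon:=(1-\varepsilon)\rho_\theta+\varepsilon\, I/d$. Then $$\widehat I_F(\theta;\{\rho_\theta\}_\theta)=\lim_{\varepsilon\to 0}\widehat I_F(\theta;\{\rho^\varepsilon_\theta\}_\theta),$$ including the case where the left-hand side equals $+\infty$.
   Context: All Hilbert spaces are finite-dimensional; $\Theta\subseteq\mathbb{R}$ and $\partial_\theta$ denotes the derivative with respect to $\theta$. For a differentiable family $\{\rho_\theta\}_\theta$ of density operators, the RLD Fisher information is $\widehat I_F(\theta;\{\rho_\theta\}_\theta)=\operatorname{Tr}[(\partial_\theta\rho_\theta)^2\rho_\theta^{-1}]$ if $\operatorname{supp}(\partial_\theta\rho_\theta)\subseteq\operatorname{supp}(\rho_\theta)$, and $+\infty$ otherwise, where $\rho_\theta^{-1}$ is the inverse on the support of $\rho_\theta$. *)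

(* Defs.v *)
From HB Require Import structures.
From mathcomp Require Import all_boot all_order all_algebra.
From mathcomp Require Import all_classical all_reals all_analysis.
From mathcomp Require Import complex.
Set Implicit Arguments. Unset Strict Implicit. Unset Printing Implicit Defensive.
Import Order.TTheory GRing.Theory Num.Theory.
Import numFieldNormedType.Exports.
Local Open Scope ring_scope.
Local Open Scope classical_set_scope.

Section QDefs.
Variable R : realType.
Local Notation C := (R[i]).

Definition adjmx m n (A : 'M[C]_(m, n)) : 'M[C]_(n, m) := (map_mx Num.conj A)^T.

Definition hermitian n (A : 'M[C]_n) : Prop := adjmx A = A.

Definition psd n (A : 'M[C]_n) : Prop :=
  hermitian A /\ forall v : 'cV[C]_n, 0 <= (adjmx v *m A *m v) 0 0.

Definition density n (A : 'M[C]_n) : Prop := psd A /\ \tr A = 1.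

(* support (range = column space) inclusion: supp A ⊆ supp B *)
Definition supp_sub n (A B : 'M[C]_n) : bool := (A^T <= B^T)%MS.

(* Moore--Penrose pseudo-inverse; for a Hermitian A it is the inverse of A on its support *)
Definition mp_inverse n (A : 'M[C]_n) : 'M[C]_n :=
  xget 0 (fun X : 'M[C]_n =>
    [/\ A *m X *m A = A, X *m A *m X = X,
        adjmx (A *m X) = A *m X & adjmx (X *m A) = X *m A]).

Definition mx_derivable n (rho : R -> 'M[C]_n) (t : R) : Prop :=
  forall i j, derivable (fun s => complex.Re (rho s i j)) t 1 /\
              derivable (fun s => complex.Im (rho s i j)) t 1.

Definition mx_deriv n (rho : R -> 'M[C]_n) (t : R) : 'M[C]_n :=
  \matrix_(i, j) Complex (derive1 (fun s => complex.Re (rho s i j)) t)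
                         (derive1 (fun s => complex.Im (rho s i j)) t).

Definition rld_fisher n (rho : R -> 'M[C]_n) (t : R) : \bar R :=
  let D := mx_deriv rho t in
  if supp_sub D (rho t) then (complex.Re (\tr (D *m D *m mp_inverse (rho t))))%:E
  else +oo%E.

Definition depolarize n (eps : R) (rho : R -> 'M[C]_n) : R -> 'M[C]_n :=
  fun t => (((1 - eps)%:C)%C *: rho t + ((eps / n%:R)%:C)%C *: 1%:M).

End QDefs.

(* Main.v *)
Require Import Defs.
From HB Require Import structures.
From mathcomp Require Import all_boot all_order all_algebra.
From mathcomp Require Import all_classical all_reals all_analysis.
From mathcomp Require Import complex spectral sesquilinear.
From mathcomp Require Import ring lra.
Import Order.TTheory GRing.Theory Num.Theory.
Import numFieldNormedType.Exports.
Local Open Scope ring_scope.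
Local Open Scope classical_set_scope.
Set Implicit Arguments. Unset Strict Implicit. Unset Printing Implicit Defensive.

Section Alg.
Variable R : realType.
Local Notation C := (R[i]).

Lemma adjmxM m n p (A : 'M[C]_(m, n)) (B : 'M[C]_(n, p)) :
  adjmx (A *m B) = adjmx B *m adjmx A.
Proof. by rewrite /adjmx map_mxM trmx_mul. Qed.

Lemma adjmxK m n (A : 'M[C]_(m, n)) : adjmx (adjmx A) = A.
Proof.
apply/matrixP => i j; rewrite /adjmx !mxE.
by rewrite -[RHS](@conjCK C).
Qed.

Lemma adjmx1 n : adjmx (1%:M : 'M[C]_n) = 1%:M.
Proof. by apply/matrixP => i j; rewrite /adjmx !mxE eq_sym rmorphMn /= conjC1. Qed.

Lemma adjmxZ m n (a : C) (A : 'M[C]_(m, n)) : adjmx (a *: A) = Num.conj a *: adjmx A.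
Proof. by apply/matrixP => i j; rewrite /adjmx !mxE rmorphM. Qed.

Lemma adjmxE m n (A : 'M[C]_(m, n)) i j : adjmx A i j = Num.conj (A j i).
Proof. by rewrite /adjmx !mxE. Qed.

Definition MP n (A X : 'M[C]_n) :=
  [/\ A *m X *m A = A, X *m A *m X = X,
      adjmx (A *m X) = A *m X & adjmx (X *m A) = X *m A].

Lemma MP_uniq n (A X Y : 'M[C]_n) : MP A X -> MP A Y -> X = Y.
Proof.
move=> [h1 h2 h3 h4] [k1 k2 k3 k4].
have eAX : A *m X = A *m Y.
  rewrite -h3 adjmxM -{1}k1 !adjmxM !mulmxA -adjmxM h3.
  by rewrite -mulmxA -adjmxM k3 mulmxA h1.
have eXA : X *m A = Y *m A.
  rewrite -h4 adjmxM -{1}k1 !adjmxM -!mulmxA -[adjmx A *m adjmx X]adjmxM h4.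
  by rewrite mulmxA -adjmxM k4 -!mulmxA [A *m (X *m A)]mulmxA h1.
by rewrite -h2 eXA -mulmxA eAX mulmxA k2.
Qed.

Lemma mp_inverseE n (A X : 'M[C]_n) : MP A X -> mp_inverse A = X.
Proof.
move=> hX; rewrite /mp_inverse; apply: xget_unique.
  by case: hX.
by move=> Y [? ? ? ?]; apply: (MP_uniq) hX; split.
Qed.


Definition cj n (U : 'M[C]_n) (w : 'rV[C]_n) := adjmx U *m diag_mx w *m U.
Definition rmul n (w1 w2 : 'rV[C]_n) := \row_k (w1 0 k * w2 0 k).

Lemma diag_mxM n (w1 w2 : 'rV[C]_n) : diag_mx w1 *m diag_mx w2 = diag_mx (rmul w1 w2).
Proof.
apply/matrixP => i j; rewrite mul_diag_mx !mxE.
by case: eqP => _; rewrite ?mulr1n ?mulr0n ?mulr0.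
Qed.

Lemma cjM n (U : 'M[C]_n) (w1 w2 : 'rV[C]_n) : U *m adjmx U = 1%:M ->
  cj U w1 *m cj U w2 = cj U (rmul w1 w2).
Proof.
move=> hU; rewrite /cj !mulmxA -[_ *m U *m adjmx U]mulmxA hU mulmx1.
by rewrite -[adjmx U *m _ *m _]mulmxA diag_mxM.
Qed.

Lemma adj_diag n (w : 'rV[C]_n) : adjmx (diag_mx w) = diag_mx (map_mx Num.conj w).
Proof.
apply/matrixP => i j; rewrite adjmxE !mxE eq_sym.
by case: eqP => [->|_]; rewrite ?mulr1n ?mulr0n ?rmorph0.
Qed.

Lemma adj_cj n (U : 'M[C]_n) (w : 'rV[C]_n) : adjmx (cj U w) = cj U (map_mx Num.conj w).
Proof. by rewrite /cj !adjmxM adjmxK adj_diag mulmxA. Qed.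

Lemma cj_MP n (U : 'M[C]_n) (w : 'rV[C]_n) : U *m adjmx U = 1%:M ->
  (forall k, Num.conj (w 0 k) = w 0 k) ->
  MP (cj U w) (cj U (map_mx GRing.inv w)).
Proof.
move=> hU hw; split; rewrite ?cjM // ?adj_cj; congr (cj U _); apply/rowP => k;
  rewrite !mxE ?hw; have [->|nz] := eqVneq (w 0 k) 0;
  rewrite ?invr0 ?mulr0 ?mul0r ?rmorph0 //.
- by rewrite divfK.
- by rewrite mulVf // mul1r.
- by rewrite rmorphM fmorphV /= hw.
- by rewrite rmorphM fmorphV /= hw.
Qed.


Lemma adj_trC m n (A : 'M[C]_(m, n)) : adjmx A = map_mx Num.conj (A^T).
Proof. by rewrite /adjmx map_trmx. Qed.

Lemma spec_decomp n (A : 'M[C]_n) : adjmx A = A ->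
  exists U (w : 'rV[C]_n), [/\ U *m adjmx U = 1%:M, adjmx U *m U = 1%:M & A = cj U w].
Proof.
move=> hA.
have nA : A \is normalmx by apply/normalmxP; rewrite -adj_trC hA.
have := orthomx_spectralP nA.
set P := spectralmx A; set w := spectral_diag A => eA.
have Pu : P \is unitarymx := spectral_unitarymx A.
have Pinv : invmx P = adjmx P by rewrite adj_trC invmx_unitary.
exists P, w; split.
- by rewrite adj_trC; apply/unitarymxP.
- by rewrite -Pinv mulVmx // spectral_unit.
- by rewrite /cj -Pinv.
Qed.

Lemma adj_delta n (k : 'I_n) : adjmx (delta_mx k (0 : 'I_1)) = delta_mx 0 k :> 'M[C]_(1, n).
Proof. by apply/matrixP => i j; rewrite adjmxE !mxE rmorph_nat andbC. Qed.

Lemma psd_cj n (U : 'M[C]_n) w : U *m adjmx U = 1%:M -> psd (cj U w) ->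
  forall k, 0 <= w 0 k.
Proof.
move=> hU [_ hp] k; have := hp (adjmx U *m delta_mx k 0).
rewrite adjmxM adjmxK adj_delta /cj !mulmxA.
rewrite -[_ *m U *m adjmx U]mulmxA hU mulmx1.
rewrite -[_ *m U *m adjmx U]mulmxA hU mulmx1 -rowE -colE !mxE.
by rewrite eqxx mulr1n.
Qed.


Lemma supp_subE n (A X D : 'M[C]_n) : MP A X -> supp_sub D A = (A *m X *m D == D).
Proof.
move=> [h1 _ _ _]; apply/idP/eqP.
  move=> /submxP [Z eZ].
  have -> : D = A *m Z^T by rewrite -[D]trmxK eZ trmx_mul trmxK.
  by rewrite mulmxA h1.
by move=> e; rewrite /supp_sub -e -mulmxA trmx_mul submxMl.
Qed.

Lemma cj_cancel n (U M N : 'M[C]_n) : U *m adjmx U = 1%:M ->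
  adjmx U *m M *m U = adjmx U *m N *m U -> M = N.
Proof.
move=> hU h; have := congr1 (fun Z => U *m Z *m adjmx U) h => /=.
by rewrite !mulmxA hU !mul1mx -!mulmxA hU !mulmx1.
Qed.

Lemma cj_mulD n (U E : 'M[C]_n) p : U *m adjmx U = 1%:M ->
  (cj U p *m (adjmx U *m E *m U) == adjmx U *m E *m U) = (diag_mx p *m E == E).
Proof.
move=> hU; have -> : cj U p *m (adjmx U *m E *m U) = adjmx U *m (diag_mx p *m E) *m U.
  by rewrite /cj !mulmxA -[_ *m U *m adjmx U]mulmxA hU mulmx1.
apply/eqP/eqP => [h|->] //; exact: cj_cancel h.
Qed.

Lemma tr_cj n (U E : 'M[C]_n) v : U *m adjmx U = 1%:M ->
  \tr ((adjmx U *m E *m U) *m (adjmx U *m E *m U) *m cj U v) =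
  \sum_k (E *m E) k k * v 0 k.
Proof.
move=> hU; have -> : (adjmx U *m E *m U) *m (adjmx U *m E *m U) *m cj U v =
   adjmx U *m ((E *m E *m diag_mx v) *m U).
  rewrite /cj !mulmxA -[_ *m U *m adjmx U]mulmxA hU mulmx1.
  by rewrite -[_ *m U *m adjmx U]mulmxA hU mulmx1.
rewrite (mxtrace_mulC (adjmx U)) -[_ *m U *m adjmx U]mulmxA hU mulmx1 /mxtrace.
by apply: eq_bigr => k _; rewrite mul_mx_diag mxE.
Qed.


Lemma Re_add (x y : C) : complex.Re (x + y) = complex.Re x + complex.Re y.
Proof. by case: x; case: y. Qed.
Lemma Im_add (x y : C) : complex.Im (x + y) = complex.Im x + complex.Im y.
Proof. by case: x; case: y. Qed.
Lemma ReMC (a : R) (z : C) : complex.Re ((a%:C)%C * z) = a * complex.Re z.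
Proof. by case: z => x y; rewrite /GRing.mul /= mul0r subr0. Qed.
Lemma ImMC (a : R) (z : C) : complex.Im ((a%:C)%C * z) = a * complex.Im z.
Proof. by case: z => x y; rewrite /GRing.mul /= mul0r addr0. Qed.
Lemma ReJ (z : C) : complex.Re (Num.conj z) = complex.Re z.
Proof. by case: z. Qed.
Lemma ImJ (z : C) : complex.Im (Num.conj z) = - complex.Im z.
Proof. by case: z. Qed.
Lemma complex_eta (z : C) : z = Complex (complex.Re z) (complex.Im z).
Proof. by case: z. Qed.

Lemma derive1_affine (f : R -> R) (a c t : R) : derivable f t 1 ->
  derive1 (fun s => a * f s + c) t = a * derive1 f t.
Proof.
move=> df; rewrite !derive1E.
have h := is_deriveD (is_deriveZ a (derivableP df)) (is_derive_cst c t 1).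
rewrite addr0 in h.
by rewrite (@derive_val _ _ _ _ _ _ _ h).
Qed.

Lemma herm_deriv n (rho : R -> 'M[C]_n) t :
  (\forall s \near t, adjmx (rho s) = rho s) -> mx_derivable rho t ->
  adjmx (mx_deriv rho t) = mx_deriv rho t.
Proof.
move=> hn hd; apply/matrixP => i j; rewrite adjmxE !mxE.
have eRe : derive1 (fun s => complex.Re (rho s j i)) t = derive1 (fun s => complex.Re (rho s i j)) t.
  rewrite !derive1E; apply: near_eq_derive; apply: filterS hn => s hs.
  by rewrite -[in RHS]hs adjmxE ReJ.
have eIm : derive1 (fun s => complex.Im (rho s j i)) t = - derive1 (fun s => complex.Im (rho s i j)) t.
  rewrite !derive1E -deriveN; last by case: (hd i j).
  apply: near_eq_derive; apply: filterS hn => s hs.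
  change (complex.Im (rho s j i) = - complex.Im (rho s i j)); by rewrite -[in RHS]hs adjmxE ImJ opprK.
apply/eqP; rewrite eq_complex ReJ ImJ /= eRe eIm opprK.
by rewrite !eqxx.
Qed.


Lemma derive1_Re_aff (x : R -> C) (a : R) (c : C) t :
  derivable (fun s => complex.Re (x s)) t 1 ->
  derive1 (fun s => complex.Re ((a%:C)%C * x s + c)) t =
  a * derive1 (fun s => complex.Re (x s)) t.
Proof.
move=> hd; have -> : (fun s => complex.Re ((a%:C)%C * x s + c)) =
  (fun s => a * complex.Re (x s) + complex.Re c).
  by apply: funext => s; rewrite Re_add ReMC.
exact: derive1_affine.
Qed.

Lemma derive1_Im_aff (x : R -> C) (a : R) (c : C) t :
  derivable (fun s => complex.Im (x s)) t 1 ->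
  derive1 (fun s => complex.Im ((a%:C)%C * x s + c)) t =
  a * derive1 (fun s => complex.Im (x s)) t.
Proof.
move=> hd; have -> : (fun s => complex.Im ((a%:C)%C * x s + c)) =
  (fun s => a * complex.Im (x s) + complex.Im c).
  by apply: funext => s; rewrite Im_add ImMC.
exact: derive1_affine.
Qed.

Lemma mx_deriv_depol n (rho : R -> 'M[C]_n) eps t : mx_derivable rho t ->
  mx_deriv (depolarize eps rho) t = ((1 - eps)%:C)%C *: mx_deriv rho t.
Proof.
move=> hd; apply/matrixP => i j; rewrite !mxE /depolarize.
case: (hd i j) => dRe dIm.
under eq_fun do rewrite !mxE.
rewrite derive1_Re_aff //.
have -> : (fun s => complex.Im ((((1 - eps)%:C)%C *: rho s + ((eps / n%:R)%:C)%C *: 1%:M) i j)) = (fun s => complex.Im (((1 - eps)%:C)%C * rho s i j + ((eps / n%:R)%:C)%C * (1%:M : 'M[C]_n) i j)) by apply: funext => s; rewrite !mxE.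
rewrite derive1_Im_aff //.
apply/eqP; rewrite eq_complex ReMC ImMC /=.
by rewrite !eqxx.
Qed.


Lemma diag_lin n (w : 'rV[C]_n) a b :
  diag_mx (a *: w + b *: const_mx 1) = a *: diag_mx w + b *: 1%:M.
Proof.
apply/matrixP => i j; rewrite !mxE.
by case: eqP => [->|_]; rewrite ?mulr1n ?mulr0n ?mulr1 ?mulr0 ?addr0.
Qed.

Lemma cj_lin n (U : 'M[C]_n) (w : 'rV[C]_n) a b : adjmx U *m U = 1%:M ->
  a *: cj U w + b *: 1%:M = cj U (a *: w + b *: const_mx 1).
Proof.
move=> hU; rewrite /cj diag_lin mulmxDr mulmxDl -!scalemxAr -!scalemxAl.
by rewrite mulmx1 hU.
Qed.

Lemma cvg_sum_fin (I : finType) (F : set_system R) (FF : Filter F)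
  (f : I -> R -> R) (l : I -> R) :
  (forall i, f i x @[x --> F] --> l i) ->
  (\sum_i f i x) @[x --> F] --> \sum_i l i.
Proof.
move=> h; elim: (index_enum I) => [|a r IH].
  under eq_fun do rewrite big_nil.
  by rewrite big_nil; exact: cvg_cst.
under eq_fun do rewrite big_cons.
by rewrite big_cons; apply: cvgD.
Qed.

End Alg.

Unset Implicit Arguments.
Theorem mainTheorem2 (R : realType) (d : nat) (Theta : set R)
    (rho : R -> 'M[R[i]]_d) (theta : R) :
  (0 < d)%N ->
  open Theta ->
  (forall t, Theta t -> density (rho t)) ->
  (forall t, Theta t -> mx_derivable rho t) ->
  Theta theta ->
  (fun eps : R => rld_fisher (depolarize eps rho) theta) @ 0^'+
    --> rld_fisher rho theta.
Proof.
move=> d0 oT dens deri Tth.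
set A := rho theta.
have hA : adjmx A = A by case: (dens _ Tth) => [[]].
have psdA : psd A by case: (dens _ Tth).
have nT : \forall s \near theta, adjmx (rho s) = rho s.
  have : nbhs theta Theta by apply: open_nbhs_nbhs; split.
  by apply: filterS => s Ts; case: (dens _ Ts) => [[]].
set D := mx_deriv rho theta.
have hD : adjmx D = D := herm_deriv nT (deri _ Tth).
have [U [w [hU1 hU2 eA]]] := spec_decomp hA.
have w_ge0 : forall k, 0 <= w 0 k by move=> k; apply: (psd_cj hU1); rewrite -eA.
set E := U *m D *m adjmx U.
have eD : D = adjmx U *m E *m U by rewrite /E !mulmxA hU2 mul1mx -mulmxA hU2 mulmx1.
have hE : adjmx E = E by rewrite /E !adjmxM adjmxK hD mulmxA.
clearbody E.
pose l k := complex.Re (w 0 k).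
have wR : forall k, w 0 k = ((l k)%:C)%C.
  by move=> k; rewrite [LHS]complex_eta (ger0_Im (w_ge0 k)).
have l_ge0 : forall k, 0 <= l k by move=> k; rewrite -ler0c -wR.
pose c k := (E *m E) k k.
have cE : forall k, c k = \sum_j E k j * Num.conj (E k j).
  move=> k; rewrite /c mxE; apply: eq_bigr => j _.
  have h := congr1 (fun M : 'M[R[i]]_d => M j k) hE.
  by rewrite /= adjmxE in h; rewrite -h.
have c_ge0 : forall k, 0 <= c k.
  by move=> k; rewrite cE; apply: sumr_ge0 => j _; exact: mulcJ_ge0.
have c0 : forall k, c k = 0 -> forall j, E k j = 0.
  move=> k; rewrite cE => /eqP; rewrite psumr_eq0; last first.
    by move=> j _; exact: mulcJ_ge0.
  move=> /allP h j; have := h j (mem_index_enum j).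
  by rewrite /= mulf_eq0 conjC_eq0 orbb => /eqP.
pose r k := complex.Re (c k).
have cR : forall k, c k = ((r k)%:C)%C.
  by move=> k; rewrite [LHS]complex_eta (ger0_Im (c_ge0 k)).
have r_ge0 : forall k, 0 <= r k by move=> k; rewrite -ler0c -cR.
have dR : (0 : R) < d%:R by rewrite ltr0n.
pose f eps := \sum_k (1 - eps) ^+ 2 * r k * ((1 - eps) * l k + eps / d%:R)^-1.
have V1 : forall eps, 0 < eps < 1 ->
    rld_fisher (depolarize eps rho) theta = (f eps)%:E.
  move=> eps /andP[e0 e1].
  rewrite /rld_fisher (mx_deriv_depol _ (deri _ Tth)) -/D.
  set weps := ((1 - eps)%:C)%C *: w + ((eps / d%:R)%:C)%C *: const_mx 1.
  have eAe : depolarize eps rho theta = cj U weps.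
    by rewrite /depolarize -/A eA cj_lin.
  have weps_k : forall k, weps 0 k = (((1 - eps) * l k + eps / d%:R)%:C)%C.
    by move=> k; rewrite !mxE wR mulr1 -rmorphM -rmorphD.
  have pos : forall k, 0 < (1 - eps) * l k + eps / d%:R.
    move=> k; apply: ltr_wpDl; last by rewrite divr_gt0.
    by rewrite mulr_ge0 // subr_ge0 ltW.
  have hwr : forall k, Num.conj (weps 0 k) = weps 0 k.
    by move=> k; rewrite weps_k; exact: conjc_real.
  have hMP := cj_MP hU1 hwr.
  rewrite eAe (mp_inverseE hMP) (supp_subE _ hMP) cjM //.
  have -> : rmul weps (map_mx GRing.inv weps) = const_mx 1.
    apply/rowP => k; have := weps_k k; rewrite !mxE => ->.
    by rewrite mulfV // eq_complex /= eqxx andbT gt_eqF.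
  have -> : cj U (const_mx 1) = 1%:M by rewrite /cj diag_const_mx mulmx1 hU2.
  rewrite mul1mx eqxx.
  have eaD : ((1 - eps)%:C)%C *: D = adjmx U *m (((1 - eps)%:C)%C *: E) *m U.
    by rewrite eD scalemxAl scalemxAr.
  rewrite eaD tr_cj //; congr (_%:E).
  rewrite (eq_bigr (fun k => (((1 - eps) ^+ 2 * r k * ((1 - eps) * l k + eps / d%:R)^-1)%:C)%C)).
    by rewrite -rmorph_sum.
  move=> k _; rewrite -scalemxAl -scalemxAr scalerA mxE -/(c k) cR.
  rewrite mxE weps_k -fmorphV -!rmorphM.
  by rewrite expr2.
have hwr0 : forall k, Num.conj (w 0 k) = w 0 k.
  by move=> k; rewrite wR; exact: conjc_real.
have hMP0 := cj_MP hU1 hwr0.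
have suppE : supp_sub D A = (diag_mx (rmul w (map_mx GRing.inv w)) *m E == E).
  by rewrite eA (supp_subE _ hMP0) cjM // {1 2}eD cj_mulD.
have HS : (forall k, l k = 0 -> r k = 0) ->
    diag_mx (rmul w (map_mx GRing.inv w)) *m E == E.
  move=> H; apply/eqP/matrixP => k j; rewrite mul_diag_mx !mxE.
  have [hl|hl] := eqVneq (l k) 0.
    have ck : c k = 0 by rewrite cR H.
    by rewrite (c0 k ck j) mulr0.
  rewrite mulfV ?mul1r // wR.
  by rewrite eq_complex /= eqxx andbT.
have SH : diag_mx (rmul w (map_mx GRing.inv w)) *m E == E ->
    forall k, l k = 0 -> r k = 0.
  move=> /eqP/matrixP hS k hl.
  have Ek : forall j, E k j = 0.
    move=> j; have := hS k j; rewrite mul_diag_mx !mxE wR hl.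
    by rewrite rmorph0 invr0 mulr0 mul0r.
  by rewrite /r /c mxE big1 // => j _; rewrite Ek mul0r.
have nE : \forall eps \near 0^'+, (f eps)%:E = rld_fisher (depolarize eps rho) theta.
  apply: filterS2 (nbhs_right_gt 0) (nbhs_right_lt ltr01) => eps h0 h1.
  by rewrite V1 // h0 h1.
apply: cvg_trans (near_eq_cvg nE) _.
case: (pselect (forall k, l k = 0 -> r k = 0)) => H.
  have -> : rld_fisher rho theta = (\sum_k r k * (l k)^-1)%:E.
    rewrite /rld_fisher -/D suppE HS //.
    rewrite -/A eA (mp_inverseE hMP0) eD tr_cj //; congr (_%:E).
    rewrite (eq_bigr (fun k => ((r k * (l k)^-1)%:C)%C)).
      by rewrite -rmorph_sum.
    by move=> k _; rewrite -/(c k) cR mxE wR -fmorphV -rmorphM.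
  have hf : f x @[x --> (0 : R)] --> \sum_k r k * (l k)^-1.
    rewrite /f; apply: cvg_sum_fin => k.
    have [hl|hl] := eqVneq (l k) 0.
      have rk0 : r k = 0 := H k hl.
      rewrite rk0 mul0r; under eq_fun do rewrite mulr0 mul0r.
      exact: cvg_cst.
    have ca : (1 - x) @[x --> (0 : R)] --> (1 : R).
      by rewrite -[X in _ --> X]subr0; apply: cvgB; [exact: cvg_cst | exact: cvg_id].
    have cden : ((1 - x) * l k + x / d%:R) @[x --> (0 : R)] --> l k.
      have c1 : ((1 - x) * l k) @[x --> (0 : R)] --> 1 * l k by apply: cvgMr_tmp.
      have c2 : (x / d%:R) @[x --> (0 : R)] --> (0 / d%:R : R).
        by apply: cvgMr_tmp; exact: cvg_id.
      rewrite -[X in _ --> X](_ : 1 * l k + 0 / d%:R = l k); last by rewrite mul1r mul0r addr0.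
      exact: cvgD c1 c2.
    have cnum : ((1 - x) ^+ 2 * r k) @[x --> (0 : R)] --> r k.
      have c3 : ((1 - x) ^+ 2) @[x --> (0 : R)] --> (1 * 1 : R).
        under eq_fun do rewrite expr2.
        exact: cvgM.
      rewrite -[X in _ --> X](_ : (1 * 1) * r k = r k); last by rewrite !mul1r.
      exact: cvgMr_tmp c3.
    exact: (cvgM cnum (cvgV hl cden)).
  apply: cvg_EFin; first exact: nearW.
  exact: (cvg_at_right_filter hf).
have [k0 hk0] : exists k, ~ (l k = 0 -> r k = 0) by apply/existsNP.
move/not_implyP: hk0 => [hl0 hr0].
have -> : rld_fisher rho theta = +oo%E.
  rewrite /rld_fisher -/D suppE.
  case: ifP => // hS; exfalso; exact: hr0 (SH hS k0 hl0).
have r0 : 0 < r k0 by rewrite lt_neqAle r_ge0 andbT eq_sym; apply/eqP.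
apply/cvgeryP/cvgryPge => M.
pose K := r k0 * d%:R / 4.
have K0 : 0 < K by rewrite divr_gt0 // mulr_gt0.
have M1 : 0 < `|M| + 1 by rewrite ltr_pwDr.
near=> eps.
have e0 : 0 < eps by near: eps; exact: nbhs_right_gt.
have e1 : eps <= 2^-1 by near: eps; apply: nbhs_right_le; rewrite invr_gt0.
have e2 : eps <= K / (`|M| + 1) by near: eps; apply: nbhs_right_le; rewrite divr_gt0.
have den_ge0 : forall k, 0 <= (1 - eps) * l k + eps / d%:R.
  move=> k; apply: addr_ge0; last by rewrite divr_ge0 // ltW.
  apply: mulr_ge0 => //; rewrite subr_ge0; apply: (le_trans e1).
  by rewrite invf_le1 ?ler1n.
have g_le : (1 - eps) ^+ 2 * r k0 * ((1 - eps) * l k0 + eps / d%:R)^-1 <= f eps.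
  rewrite /f (bigD1 k0) //= lerDl; apply: sumr_ge0 => k _.
  by rewrite mulr_ge0 ?invr_ge0 // mulr_ge0 // sqr_ge0.
apply: (le_trans _ g_le); rewrite hl0 mulr0 add0r invf_div.
have q0 : 0 < r k0 * (d%:R / eps) by rewrite mulr_gt0 // divr_gt0.
apply: (@le_trans _ _ (`|M| + 1)); first by rewrite (le_trans (ler_norm M)) // lerDl.
apply: (@le_trans _ _ (4^-1 * (r k0 * (d%:R / eps)))).
  rewrite (_ : 4^-1 * (r k0 * (d%:R / eps)) = K / eps); last by rewrite /K; ring.
  rewrite ler_pdivlMr // mulrC -ler_pdivlMr //.
have h14 : 4^-1 <= (1 - eps) ^+ 2.
  have e1' : eps * 2 <= 1 by rewrite -ler_pdivlMr // mul1r.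
  nra.
rewrite -mulrA; apply: ler_wpM2r; first exact: ltW.
exact: h14.
Unshelve. all: by end_near.
Qed.
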